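(* For integers $n,m$ and $y=(y_1,y_2,y_3)\in Q$, \[\sum_{r=y_1}^n\sum_{s=y_1+y_2}^m\mathcal{K}_{n,m;r,s}(z,w;q)\,\Phi_{r,s;y}(z,w;q)=z^{y_1}w^{y_1+y_2}q^{\frac12(y_1^2+y_2^2+y_3^2)}\Phi_{n,m;y}(z,w;q).\]
   Context: $Q=\{y\in\mathbb{Z}^3:y_1+y_2+y_3=0\}$. For $n\in\mathbb{Z}$, $(a;q)_n=(a;q)_\infty/(aq^n;q)_\infty$ (so $1/(q;q)_n=0$ for $n<0$). $\mathcal{K}_{n,m;r,s}(z,w;q):=\frac{z^rw^sq^{r^2-rs+s^2}}{(q;q)_{n-r}(q;q)_{m-s}}$, and \[\Phi_{n,m;y}(z,w;q):=\frac{(zwq;q)_{n+m}}{(q;q)_{n-y_1}(zq;q)_{n-y_2}(zwq;q)_{n-y_3}(q;q)_{m+y_3}(wq;q)_{m+y_2}(zwq;q)_{m+y_1}}.\] A sum $\sum_{r=A}^B$ with $B<A$ is empty. *)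

(* Defs.v *)
From mathcomp Require Import all_boot all_order all_algebra.
Set Implicit Arguments. Unset Strict Implicit. Unset Printing Implicit Defensive.
Import Order.TTheory GRing.Theory Num.Theory.
Local Open Scope ring_scope.

(* q-Pochhammer symbol (a;q)_n for integer n, with
   (a;q)_n = (a;q)_oo/(a q^n;q)_oo, i.e.
   n >= 0 : prod_{i=0}^{n-1} (1 - a q^i)
   n = -k < 0 : 1 / prod_{j=1}^{k} (1 - a q^{-j}).
   (For a = q and n < 0 the product vanishes, and MathComp's 0^-1 = 0
   gives 1/(q;q)_n = 0, matching the paper's convention.) *)
Definition qpoch (K : fieldType) (a q : K) (n : int) : K :=
  match n with
  | Posz k => \prod_(i < k) (1 - a * q ^+ i)
  | Negz k => (\prod_(j < k.+1) (1 - a * q ^- j.+1))^-1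
  end.

Definition isum (K : fieldType) (A B : int) (F : int -> K) : K :=
  if A <= B then \sum_(i < (absz (B - A)).+1) F (A + (i : nat)%:Z) else 0.

Definition Kker (K : fieldType) (n m r s : int) (z w q : K) : K :=
  z ^ r * w ^ s * q ^ (r * r - r * s + s * s)
  / (qpoch q q (n - r) * qpoch q q (m - s)).

Definition Phi (K : fieldType) (n m y1 y2 y3 : int) (z w q : K) : K :=
  qpoch (z * w * q) q (n + m)
  / (qpoch q q (n - y1) * qpoch (z * q) q (n - y2) * qpoch (z * w * q) q (n - y3)
     * qpoch q q (m + y3) * qpoch (w * q) q (m + y2) * qpoch (z * w * q) q (m + y1)).

(* Main.v *)
Require Import Defs.
From mathcomp Require Import all_boot all_order all_algebra.
From mathcomp Require Import ring zify.
Import Order.TTheory GRing.Theory Num.Theory.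
Set Implicit Arguments. Unset Strict Implicit. Unset Printing Implicit Defensive.
Local Open Scope ring_scope.

Ltac nz := repeat (match goal with |- context [?x != 0] =>
   let H := fresh in (have H : x != 0 by assumption); rewrite H; clear H end);
   rewrite /= ?oner_neq0 //.

Definition P (K : fieldType) (a q : K) (n : nat) : K := \prod_(i < n) (1 - a * q ^+ i).
Definition D (K : fieldType) (q : K) (N k : nat) : K :=
  if (k <= N)%N then (P q q (N - k))^-1 else 0.

Lemma P0 (K : fieldType) (a q : K) : P a q 0 = 1.
Proof. by rewrite /P big_ord0. Qed.

Lemma PSr (K : fieldType) (a q : K) n : P a q n.+1 = P a q n * (1 - a * q ^+ n).
Proof. by rewrite /P big_ord_recr. Qed.

Lemma PSl (K : fieldType) (a q : K) n : P a q n.+1 = (1 - a) * P (a * q) q n.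
Proof.
rewrite /P big_ord_recl /= expr0 mulr1; congr (_ * _).
by apply: eq_bigr => i _; rewrite exprS mulrA.
Qed.

Lemma Padd (K : fieldType) (a q : K) m n : P a q (m + n) = P a q m * P (a * q ^+ m) q n.
Proof.
elim: n => [|n IH]; first by rewrite addn0 P0 mulr1.
by rewrite addnS !PSr IH -mulrA -mulrA exprD mulrA.
Qed.

Lemma Pne0 (K : fieldType) (a q : K) n : (forall i, 1 - a * q ^+ i != 0) -> P a q n != 0.
Proof. by move=> h; apply/prodf_neq0 => i _. Qed.

Lemma D_lt (K : fieldType) (q : K) N k : (N < k)%N -> D q N k = 0.
Proof. by rewrite /D ltnNge => /negbTE ->. Qed.

Lemma D_S (K : fieldType) (q : K) N k : D q N.+1 k.+1 = D q N k.
Proof. by rewrite /D ltnS subSS. Qed.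

Lemma D_N0 (K : fieldType) (q : K) N : D q N 0 = (P q q N)^-1.
Proof. by rewrite /D subn0. Qed.

Lemma D_add (K : fieldType) (q : K) k L l : D q (k + L) (k + l) = D q L l.
Proof. by rewrite /D leq_add2l subnDl. Qed.

Lemma D_diag (K : fieldType) (q : K) k l : D q (k + l) k = (P q q l)^-1.
Proof. by rewrite /D leq_addr addKn. Qed.


Lemma PD0 (K : fieldType) (q : K) N : (forall i, 1 - q * q ^+ i != 0) ->
  (1 - q ^+ N.+1) * D q N.+1 0 = D q N 0.
Proof.
move=> hq; rewrite !D_N0 PSr exprS.
have h1 := Pne0 N hq; have h2 := hq N.
field; by rewrite h1 h2.
Qed.

Lemma PD1 (K : fieldType) (q : K) N m : (forall i, 1 - q * q ^+ i != 0) ->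
  (1 - q ^+ N.+1) * (D q N.+1 m.+1 / P q q m.+1)
  = D q N m.+1 / P q q m.+1 + q ^+ (N - m) * (D q N m / P q q m).
Proof.
move=> hq; rewrite D_S.
case: (ltngtP m N) => hmN.
- have [t ->] : exists t, N = (m + t.+1)%N by exists (N - m.+1)%N; lia.
  rewrite D_diag.
  have -> : D q (m + t.+1) m.+1 = (P q q t)^-1 by rewrite -(addn1 m) D_add D_S D_N0.
  rewrite (_ : m + t.+1 - m = t.+1)%N; last by lia.
  rewrite !PSr.
  have h1 := Pne0 m hq; have h2 := Pne0 t hq; have h3 := hq m; have h4 := hq t.
  rewrite (_ : (m + t.+1).+1 = t.+1 + m.+1)%N; last by lia.
  rewrite exprD !exprS. field. by rewrite h1 h2 h3 h4.
- by rewrite !D_lt ?mul0r ?mulr0 ?addr0 //; lia.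
- subst m; rewrite (D_lt _ (ltnSn N)) subnn expr0 mul1r mul0r add0r /D leqnn subnn P0 invr1 PSr -exprS.
  have h1 := Pne0 N hq; have h3 := hq N. rewrite -exprS in h3.
  field. by rewrite h1 h3.
Qed.

Lemma PD2 (K : fieldType) (q : K) N m : (forall i, 1 - q * q ^+ i != 0) ->
  (1 - q ^+ N.+1) * (D q N.+1 m.+1 / P q q m.+1)
  = q ^+ m.+1 * (D q N m.+1 / P q q m.+1) + D q N m / P q q m.
Proof.
move=> hq; rewrite D_S.
case: (ltngtP m N) => hmN.
- have [t ->] : exists t, N = (m + t.+1)%N by exists (N - m.+1)%N; lia.
  rewrite D_diag.
  have -> : D q (m + t.+1) m.+1 = (P q q t)^-1 by rewrite -(addn1 m) D_add D_S D_N0.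
  rewrite !PSr.
  have h1 := Pne0 m hq; have h2 := Pne0 t hq; have h3 := hq m; have h4 := hq t.
  rewrite (_ : (m + t.+1).+1 = t.+1 + m.+1)%N; last by lia.
  rewrite exprD !exprS. field. by rewrite h1 h2 h3 h4.
- by rewrite !D_lt ?mul0r ?mulr0 ?addr0 //; lia.
- subst m; rewrite (D_lt _ (ltnSn N)) mul0r mulr0 add0r /D leqnn subnn P0 invr1 PSr -exprS.
  have h1 := Pne0 N hq; have h3 := hq N. rewrite -exprS in h3.
  field. by rewrite h1 h3.
Qed.

Definition T (K : fieldType) (q : K) N (h : nat -> K) (c x : K) (k : nat) : K :=
  x ^+ k * q ^+ (k * k.-1) * (D q N k / P q q k) * h k / P c q k.
Definition G (K : fieldType) (q : K) N (h : nat -> K) (c x : K) : K :=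
  \sum_(k < N.+1) T q N h c x k.

Lemma G_last (K : fieldType) (q : K) N h (c x : K) :
  T q N h c x 0 + \sum_(i < N.+1) T q N h c x i.+1 = G q N h c x.
Proof.
rewrite -(big_ord_recl N.+1 (T q N h c x)) big_ord_recr /=.
by rewrite /T (D_lt _ (ltnSn N)) mul0r mulr0 !mul0r addr0.
Qed.

Lemma PD1' (K : fieldType) (q : K) N m : (forall i, 1 - q * q ^+ i != 0) ->
  D q N.+1 m.+1 / P q q m.+1
  = (D q N m.+1 / P q q m.+1 + q ^+ (N - m) * (D q N m / P q q m)) / (1 - q ^+ N.+1).
Proof.
move=> hq; rewrite -PD1 //; have := hq N; rewrite -exprS => h.
field; by rewrite h (Pne0 _ hq).
Qed.

Lemma PD2' (K : fieldType) (q : K) N m : (forall i, 1 - q * q ^+ i != 0) ->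
  D q N.+1 m.+1 / P q q m.+1
  = (q ^+ m.+1 * (D q N m.+1 / P q q m.+1) + D q N m / P q q m) / (1 - q ^+ N.+1).
Proof.
move=> hq; rewrite -PD2 //; have := hq N; rewrite -exprS => h.
field; by rewrite h (Pne0 _ hq).
Qed.

Lemma T0 (K : fieldType) (q : K) N h (c x : K) : T q N h c x 0 = D q N 0 * h 0%N.
Proof. by rewrite /T /= mul0n !expr0 !mul1r !P0 !divr1. Qed.

Lemma R1t (K : fieldType) (q : K) N h h' (c x : K) i :
  (forall i, 1 - q * q ^+ i != 0) -> (forall i, 1 - c * q ^+ i != 0) ->
  (forall k, h' k = h k.+1) ->
  (1 - q ^+ N.+1) * T q N.+1 h c x i.+1
  = T q N h c x i.+1 + x * q ^+ N / (1 - c) * T q N h' (c * q) (x * q) i.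
Proof.
move=> hq hc hh.
rewrite /T hh PD1' //.
have h0 : 1 - c != 0 by have := hc 0%N; rewrite expr0 mulr1.
have hP : P (c * q) q i != 0 by apply: Pne0 => j; rewrite -mulrA -exprS.
have hPq : P q q i != 0 by apply: Pne0.
have hqi := hq i.
have hqN := hq N. rewrite -exprS in hqN.
have hPc1 : P c q i.+1 != 0 by apply: Pne0.
have hPq1 : P q q i.+1 != 0 by apply: Pne0.
set d1 := D q _ i.+1. set d0 := D q _ i.
case: (leqP i N) => hiN; last first.
  rewrite /d0 (D_lt _ hiN) !mul0r !mulr0 !mul0r !addr0. field. by rewrite ?h0 ?hP ?hPq ?hqi ?hqN ?hPc1 ?hPq1.
rewrite (PSl c) PSr.
have eN : q ^+ N = q ^+ (N - i) * q ^+ i by rewrite -exprD subnK.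
have eE : q ^+ (i.+1 * i.+1.-1) = q ^+ (i * i.-1) * q ^+ i * q ^+ i.
  by rewrite -!exprD; congr (_ ^+ _); case: i {hqi hP hPq hPc1 hPq1 d1 d0 eN hiN} => //= n; lia.
rewrite eE !exprS eN exprMn.
field.
rewrite h0 hP hPq hqi /=. by rewrite -eN -exprS hqN.
Qed.

Lemma R2t (K : fieldType) (q : K) N h h' (c x : K) i :
  (forall i, 1 - q * q ^+ i != 0) -> (forall i, 1 - c * q ^+ i != 0) ->
  (forall k, h' k = h k.+1) ->
  (1 - q ^+ N.+1) * T q N.+1 h c x i.+1
  = T q N h c (x * q) i.+1 + x / (1 - c) * T q N h' (c * q) (x * q ^+ 2) i.
Proof.
move=> hq hc hh.
rewrite /T hh PD2' //.
have h0 : 1 - c != 0 by have := hc 0%N; rewrite expr0 mulr1.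
have hP : P (c * q) q i != 0 by apply: Pne0 => j; rewrite -mulrA -exprS.
have hPq : P q q i != 0 by apply: Pne0.
have hqi := hq i.
have hqN := hq N. rewrite -exprS in hqN.
set d1 := D q _ i.+1. set d0 := D q _ i.
rewrite (PSl c) PSr.
have eE : q ^+ (i.+1 * i.+1.-1) = q ^+ (i * i.-1) * q ^+ i * q ^+ i.
  by rewrite -!exprD; congr (_ ^+ _); case: i {hqi hP hPq d1 d0} => //= n; lia.
rewrite eE !exprS !exprMn expr0 expr1n mulr1.
field.
by rewrite h0 hP hPq hqi -exprS hqN.
Qed.

Lemma R1 (K : fieldType) (q : K) N h h' (c x : K) :
  (forall i, 1 - q * q ^+ i != 0) -> (forall i, 1 - c * q ^+ i != 0) ->
  (forall k, h' k = h k.+1) ->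
  (1 - q ^+ N.+1) * G q N.+1 h c x
  = G q N h c x + x * q ^+ N / (1 - c) * G q N h' (c * q) (x * q).
Proof.
move=> hq hc hh.
rewrite /G big_ord_recl mulrDr mulr_sumr.
rewrite (eq_bigr (fun i : 'I_N.+1 => T q N h c x i.+1 + x * q ^+ N / (1 - c) * T q N h' (c * q) (x * q) i));
  last by move=> i _; rewrite (@R1t _ q N h h' c x i hq hc hh).
rewrite big_split /= -mulr_sumr addrA; congr (_ + _).
rewrite -[RHS]/(G q N h c x) -G_last; congr (_ + _).
by rewrite !T0 mulrA PD0.
Qed.

Lemma R2 (K : fieldType) (q : K) N h h' (c x : K) :
  (forall i, 1 - q * q ^+ i != 0) -> (forall i, 1 - c * q ^+ i != 0) ->
  (forall k, h' k = h k.+1) ->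
  (1 - q ^+ N.+1) * G q N.+1 h c x
  = G q N h c (x * q) + x / (1 - c) * G q N h' (c * q) (x * q ^+ 2).
Proof.
move=> hq hc hh.
rewrite /G big_ord_recl mulrDr mulr_sumr.
rewrite (eq_bigr (fun i : 'I_N.+1 => T q N h c (x * q) i.+1 + x / (1 - c) * T q N h' (c * q) (x * q ^+ 2) i));
  last by move=> i _; rewrite (@R2t _ q N h h' c x i hq hc hh).
rewrite big_split /= -mulr_sumr addrA; congr (_ + _).
rewrite -[RHS]/(G q N h c (x * q)) -G_last; congr (_ + _).
by rewrite !T0 mulrA PD0.
Qed.

Lemma G_zero (K : fieldType) (q : K) N (c x : K) : G q N (fun _ => 0) c x = 0.
Proof. by rewrite /G big1 // => i _; rewrite /T mulr0 mul0r. Qed.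

Lemma Pshift (K : fieldType) (a q : K) L : 1 - a != 0 ->
  P (a * q) q L = P a q L * (1 - a * q ^+ L) / (1 - a).
Proof. by move=> h; rewrite -PSr PSl [RHS]mulrC mulKf. Qed.

Lemma ndS (K : fieldType) (a q : K) : (forall i, 1 - a * q ^+ i != 0) ->
  (forall i, 1 - (a * q) * q ^+ i != 0).
Proof. by move=> h i; rewrite -mulrA -exprS. Qed.

Lemma solve_lin (K : fieldType) (k X Y : K) : k != 0 -> k * X = Y -> X = Y / k.
Proof. by move=> hk <-; rewrite mulrC mulKf. Qed.

Lemma solve_lin' (K : fieldType) (k X Y : K) : k != 0 -> X * k = Y -> X = Y / k.
Proof. by move=> hk <-; rewrite mulfK. Qed.

Lemma V2 (K : fieldType) (q : K) L : (forall i, 1 - q * q ^+ i != 0) ->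
  forall a, (forall i, 1 - a * q ^+ i != 0) ->
  G q L (fun _ => 1) a a = (P q q L * P a q L)^-1.
Proof.
move=> hq; elim: L => [|L IH] a ha.
  by rewrite /G big_ord1 T0 D_N0 !P0 mulr1 mul1r.
have hqL := hq L; rewrite -exprS in hqL.
rewrite (solve_lin hqL (@R1 _ q L _ (fun _ => 1) a a hq ha (fun k => erefl))).
rewrite IH // IH; last exact: ndS.
have h0 : 1 - a != 0 by have := ha 0%N; rewrite expr0 mulr1.
rewrite Pshift // !PSr.
have h1 := Pne0 L hq; have h2 := Pne0 L ha; have h3 := ha L.
rewrite -exprS. field. by rewrite h0 h1 h2 h3 hqL.
Qed.

Lemma V3 (K : fieldType) (q : K) N : (forall i, 1 - q * q ^+ i != 0) ->
  forall M c, (forall i, 1 - c * q ^+ i != 0) ->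
  G q N (D q M) c c = P c q (N + M) / (P q q N * P q q M * P c q N * P c q M).
Proof.
move=> hq; elim: N => [|N IH] M c hc.
  rewrite /G big_ord1 T0 !D_N0 !P0 add0n.
  have h1 := Pne0 M hq; have h2 := Pne0 M hc.
  field. by rewrite h1 h2 oner_neq0.
have hqN := hq N; rewrite -exprS in hqN.
have h0 : 1 - c != 0 by have := hc 0%N; rewrite expr0 mulr1.
case: M => [|M].
  rewrite (solve_lin hqN (@R1 _ q N _ (fun _ => 0) c c hq hc (fun k => erefl))).
  rewrite G_zero mulr0 addr0 IH // !addn0 !P0 !mulr1.
  have h1 := Pne0 N hq; have h2 := Pne0 N hc.
  rewrite !PSr -exprS. field. by rewrite h1 h2 (hc N) hqN.
rewrite (solve_lin hqN (@R1 _ q N _ (D q M) c c hq hc (fun k => D_S q M k))).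
rewrite IH // IH; last exact: ndS.
rewrite !Pshift // addSn addnS !PSr.
have h1 := Pne0 N hq; have h2 := Pne0 N hc; have h3 := Pne0 M hq; have h4 := Pne0 M hc.
have h5 := Pne0 (N + M) hc.
rewrite -!exprS !exprS !exprD.
have h6 := hc N; have h7 := hc M; have h8 := hq N; have h9 := hq M.
field. nz.
Qed.

Lemma V1 (K : fieldType) (q : K) i : q != 0 -> (forall i, 1 - q * q ^+ i != 0) ->
  forall j c x, (forall i, 1 - c * q ^+ i != 0) -> x * q ^+ (i + j) = q ->
  G q i (D q j) c x * q ^+ (i * j) = P c q (i + j) / (P q q i * P q q j * P c q i * P c q j).
Proof.
move=> hq0 hq; elim: i => [|i IH] j c x hc hx.
  rewrite /G big_ord1 T0 !D_N0 !P0 add0n mul0n expr0 mulr1.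
  have h1 := Pne0 j hq; have h2 := Pne0 j hc.
  field. nz.
have hqN := hq i; rewrite -exprS in hqN.
have h0 : 1 - c != 0 by have := hc 0%N; rewrite expr0 mulr1.
have hqk : forall k, q ^+ k != 0 by move=> k; rewrite expf_neq0.
case: j hx => [|j] hx.
  rewrite (solve_lin hqN (@R2 _ q i _ (fun _ => 0) c x hq hc (fun k => erefl))).
  rewrite G_zero mulr0 addr0 muln0 expr0 mulr1.
  have := IH 0%N c (x * q) hc; rewrite muln0 expr0 mulr1 => ->; last first.
    by rewrite -mulrA -exprS -[RHS]hx; congr (_ * _ ^+ _); lia.
  rewrite !addn0 !P0 !mulr1.
  have h1 := Pne0 i hq; have h2 := Pne0 i hc; have h3 := hc i; have h4 := hq i.
  rewrite !PSr -exprS. field. nz.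
rewrite (solve_lin hqN (@R2 _ q i _ (D q j) c x hq hc (fun k => D_S q j k))).
have e1 := IH j.+1 c (x * q) hc.
have e2 := IH j (c * q) (x * q ^+ 2) (ndS hc).
rewrite (solve_lin' (hqk _) (e1 _)); last by rewrite -mulrA -exprS -[RHS]hx; congr (_ * _ ^+ _); lia.
rewrite (solve_lin' (hqk _) (e2 _)); last by rewrite -mulrA -exprD -[RHS]hx; congr (_ * _ ^+ _); lia.
have -> : x = q / q ^+ (i + j).+2 by apply: (solve_lin' (hqk _)); rewrite -[RHS]hx; congr (_ * _ ^+ _); lia.
rewrite !Pshift // addSn addnS !PSr.
have h1 := Pne0 i hq; have h2 := Pne0 i hc; have h3 := Pne0 j hq; have h4 := Pne0 j hc.
have h5 := Pne0 (i + j) hc.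
rewrite !mulSn !mulnS !exprD.
rewrite -!exprS !exprS !exprD.
have h6 := hc i; have h7 := hc j; have h8 := hq i; have h9 := hq j.
have hqi := hqk i; have hqj := hqk j; have hqij := hqk (i * j)%N.
field. nz.
Qed.

Lemma Alem (K : fieldType) (q u : K) N k : q != 0 -> (forall i, 1 - q * q ^+ i != 0) ->
  (forall i, 1 - u * q ^+ i != 0) ->
  \sum_(i < N.+1) D q N i * D q i k * (u / q) ^+ i * q ^+ (i * i) / q ^+ (i * k) / P u q i
  = (u / q) ^+ k * D q N k / P u q N.
Proof.
move=> hq0 hq hu.
have hqk : forall k, q ^+ k != 0 by move=> n; rewrite expf_neq0.
case: (leqP k N) => hkN; last first.
  rewrite (D_lt _ hkN) mulr0 mul0r big1 // => i _.
  by rewrite (@D_lt _ q i k) ?mulr0 ?mul0r //; have := ltn_ord i; lia.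
have [L ->] : exists L, N = (k + L)%N by exists (N - k)%N; lia.
rewrite -(big_mkord xpredT (fun i => D q (k + L) i * D q i k * (u / q) ^+ i * q ^+ (i * i) / q ^+ (i * k) / P u q i)).
rewrite (@big_cat_nat _ _ _ k) //=; last by lia.
rewrite big_nat_cond big1 ?add0r; last first.
  by move=> i /andP [/andP [_ hi] _]; rewrite (@D_lt _ q i k) ?mulr0 ?mul0r.
rewrite (big_addn 0 _ k) (_ : (k + L).+1 - k = L.+1)%N; last by lia.
rewrite big_mkord.
rewrite (eq_bigr (fun l : 'I_L.+1 => (u / q) ^+ k / P u q k * T q L (fun _ => 1) (u * q ^+ k) (u * q ^+ k) l)); last first.
  move=> l _.
  rewrite /T !(addnC l k) D_add D_diag Padd exprD.
  have e : q ^+ ((k + l) * (k + l)) = q ^+ ((k + l) * k) * q ^+ l * (q ^+ k) ^+ l * q ^+ (l * l.-1).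
    rewrite -exprM -!exprD; congr (_ ^+ _); case: (l : nat) => [|n] /=; lia.
  rewrite e.
  have hP1 := Pne0 k hu.
  have hP2 : P (u * q ^+ k) q l != 0 by apply: Pne0 => n; rewrite -mulrA -exprD.
  have hP3 := Pne0 l hq.
  have := hqk ((k + l) * k)%N; have := hqk l; have := hqk (l * l.-1)%N; have hqk' := hqk k.
  rewrite !exprMn !exprVn.
  move: (q ^+ ((k + l) * k)) (q ^+ l) (q ^+ (l * l.-1)) => A B E hE hB hA.
  field. nz.
rewrite -mulr_sumr -/(G q L (fun _ => 1) (u * q ^+ k) (u * q ^+ k)) V2 //; last first.
  by move=> n; rewrite -mulrA -exprD.
rewrite D_diag Padd.
have hP1 := Pne0 k hu.
have hP2 : P (u * q ^+ k) q L != 0 by apply: Pne0 => n; rewrite -mulrA -exprD.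
have hP3 := Pne0 L hq.
field. nz.
Qed.

Lemma G_widen (K : fieldType) (q : K) i N h (c x : K) : (i <= N)%N ->
  G q i h c x = \sum_(k < N.+1) T q i h c x k.
Proof.
move=> hi; rewrite /G (big_ord_widen N.+1 (T q i h c x)) ?ltnS // big_mkcond.
apply: eq_bigr => k _; case: ifP => // /negbT; rewrite -leqNgt => hk.
by rewrite /T (D_lt _ hk) mul0r mulr0 !mul0r.
Qed.

Lemma core (K : fieldType) (q u v : K) N M : q != 0 -> (forall i, 1 - q * q ^+ i != 0) ->
  (forall i, 1 - u * q ^+ i != 0) -> (forall i, 1 - v * q ^+ i != 0) ->
  (forall i, 1 - (u * v / q) * q ^+ i != 0) ->
  \sum_(i < N.+1) \sum_(j < M.+1)
    (D q N i * D q M j * (u / q) ^+ i * (v / q) ^+ j * q ^+ (i * i) * q ^+ (j * j)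
      / q ^+ (i * j) / (P u q i * P v q j)
     * (P (u * v / q) q (i + j) / (P q q i * P q q j * P (u * v / q) q i * P (u * v / q) q j)))
  = P (u * v / q) q (N + M) / (P q q N * P q q M * P u q N * P v q M
       * P (u * v / q) q N * P (u * v / q) q M).
Proof.
move=> hq0 hq hu hv hc.
set c := u * v / q.
have hqk : forall k, q ^+ k != 0 by move=> n; rewrite expf_neq0.
pose a (N : nat) (u : K) (i k : nat) :=
  D q N i * D q i k * (u / q) ^+ i * q ^+ (i * i) / q ^+ (i * k) / P u q i.
pose C (k : nat) := q ^+ k * q ^+ (k * k.-1) / (P q q k * P c q k).
have step1 : forall (i : 'I_N.+1) (j : 'I_M.+1),
  D q N i * D q M j * (u / q) ^+ i * (v / q) ^+ j * q ^+ (i * i) * q ^+ (j * j)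
      / q ^+ (i * j) / (P u q i * P v q j)
     * (P c q (i + j) / (P q q i * P q q j * P c q i * P c q j))
  = \sum_(k < N.+1) C k * a N u i k * a M v j k.
  move=> i j.
  have hx : q / q ^+ (i + j) * q ^+ (i + j) = q by rewrite mulfVK.
  rewrite -(V1 hq0 hq hc hx).
  rewrite (@G_widen _ q i N); last by rewrite -ltnS.
  rewrite mulr_suml mulr_sumr; apply: eq_bigr => k _.
  have ex : (q / q ^+ (i + j)) ^+ k = q ^+ k / (q ^+ (i * k) * q ^+ (j * k))
    by rewrite expr_div_n -exprM mulnDl exprD.
  rewrite /T ex /C /a /c.
  have := hqk (i * j)%N; have := hqk (i * i)%N; have := hqk (j * j)%N.
  have := hqk (i * k)%N; have := hqk (j * k)%N; have := hqk k.
  have := Pne0 i hu; have := Pne0 j hv; have := Pne0 k hq; have := Pne0 k hc.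
  have := Pne0 i hq; have := Pne0 j hq.
  move: (q ^+ (i * j)) (q ^+ (i * i)) (q ^+ (j * j)) (q ^+ (i * k)) (q ^+ (j * k)) (q ^+ k).
  move=> Qij Qii Qjj Qik Qjk Qk h1 h2 h3 h4 h5 h6 h7 h8 h9 h10 h11 h12.
  move: ((u / q) ^+ i) ((v / q) ^+ j) (q ^+ (k * k.-1)) (D q N i) (D q M j) (D q i k) (D q j k) => X1 X2 X3 X4 X5 X6 X7.
  field. nz.
under eq_bigr => i _ do under eq_bigr => j _ do rewrite step1.
under eq_bigr => i _ do rewrite exchange_big.
rewrite exchange_big /=.
rewrite (eq_bigr (fun k : 'I_N.+1 => C k * ((u / q) ^+ k * D q N k / P u q N) * ((v / q) ^+ k * D q M k / P v q M))); last first.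
  move=> k _.
  under eq_bigr => i _ do rewrite -mulr_sumr.
  rewrite -mulr_suml -mulr_sumr.
  by rewrite /a Alem // Alem.
rewrite (eq_bigr (fun k : 'I_N.+1 => T q N (D q M) c c k / (P u q N * P v q M))); last first.
  move=> k _.
  rewrite /T /C /c !expr_div_n exprMn.
  have := hqk k; have := Pne0 k hq; have := Pne0 k hc; have := Pne0 N hu; have := Pne0 M hv.
  move: (q ^+ k) (u ^+ k) (v ^+ k) (q ^+ (k * k.-1)) (D q N k) (D q M k) => Qk Uk Vk E D1 D2 h1 h2 h3 h4 h5.
  field. nz.
rewrite -mulr_suml -/(G q N (D q M) c c) V3 //.
have := Pne0 N hu; have := Pne0 M hv; have := Pne0 N hq; have := Pne0 M hq;
  have := Pne0 N hc; have := Pne0 M hc.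
move: (P c q (N + M)) => X h1 h2 h3 h4 h5 h6.
field. nz.
Qed.

Lemma qpoch_nat (K : fieldType) (a q : K) (n : nat) : qpoch a q n = P a q n.
Proof. by []. Qed.

Lemma qpoch_step (K : fieldType) (a q : K) (k : int) : (forall t : int, a * q ^ t != 1) ->
  qpoch a q (k + 1) = qpoch a q k * (1 - a * q ^ k).
Proof.
move=> ha.
have hn : forall t : int, 1 - a * q ^ t != 0 by move=> t; rewrite subr_eq0 eq_sym ha.
case: k => [n|n].
  by rewrite (_ : Posz n + 1 = Posz n.+1) ?qpoch_nat ?PSr //; lia.
case: n => [|n].
  rewrite (_ : Negz 0 + 1 = Posz 0); last by rewrite NegzE; lia.
  rewrite /qpoch big_ord0 big_ord1.
  have := hn (Negz 0); rewrite /exprz => h.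
  by rewrite mulVf.
rewrite (_ : Negz n.+1 + 1 = Negz n); last by rewrite !NegzE; lia.
rewrite /qpoch (big_ord_recr n.+1) /=.
have := hn (Negz n.+1); rewrite /exprz => h.
have h2 : \prod_(j < n.+1) (1 - a * q ^- j.+1) != 0.
  apply/prodf_neq0 => j _; have := hn (Negz j); by rewrite /exprz.
by rewrite invfM mulfVK.
Qed.

Lemma qpoch_split (K : fieldType) (a q : K) (k : int) (i : nat) : q != 0 ->
  (forall t : int, a * q ^ t != 1) ->
  qpoch a q (k + i%:Z) = qpoch a q k * P (a * q ^ k) q i.
Proof.
move=> hq0 ha; elim: i => [|i IH]; first by rewrite addr0 P0 mulr1.
rewrite (_ : k + i.+1%:Z = (k + i%:Z) + 1); last by lia.
rewrite qpoch_step // IH PSr -mulrA; congr (_ * (_ * _)).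
by rewrite expfzDr // mulrA.
Qed.

Lemma qpoch_qq_neg (K : fieldType) (q : K) (n : int) : q != 0 -> n < 0 -> qpoch q q n = 0.
Proof.
move=> hq0; case: n => // n _.
rewrite /qpoch big_ord_recl /= expr1 divff // subrr mul0r invr0 //.
Qed.

Lemma qexp (K : fieldType) (q : K) (y1 y3 : int) (i j : nat) : q != 0 ->
  q ^ ((y1 + i%:Z) * (y1 + i%:Z) - (y1 + i%:Z) * (- y3 + j%:Z) + (- y3 + j%:Z) * (- y3 + j%:Z))
  = q ^ (y1 * y1 + y1 * y3 + y3 * y3) * (q ^ (y1 + y1 + y3)) ^+ i * (q ^ (- y1 - y3 - y3)) ^+ j
    * q ^+ (i * i) * q ^+ (j * j) / q ^+ (i * j).
Proof.
move=> hq0.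
have -> : (y1 + i%:Z) * (y1 + i%:Z) - (y1 + i%:Z) * (- y3 + j%:Z) + (- y3 + j%:Z) * (- y3 + j%:Z)
  = (y1 * y1 + y1 * y3 + y3 * y3) + (y1 + y1 + y3) * i%:Z + (- y1 - y3 - y3) * j%:Z
    + (i * i)%N%:Z + (j * j)%N%:Z - (i * j)%N%:Z.
  rewrite !PoszM; ring.
set E := y1 * y1 + y1 * y3 + y3 * y3. set X := y1 + y1 + y3. set Y := - y1 - y3 - y3.
rewrite !expfzDr // -invr_expz.
rewrite -!(exprz_exp q) /X /Y !expfzDr //.
Qed.

Definition uu (K : fieldType) (z q : K) (y1 y3 : int) := z * q * q ^ (y1 + y1 + y3).
Definition vv (K : fieldType) (w q : K) (y1 y3 : int) := w * q * q ^ (- y1 - y3 - y3).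
Definition cc (K : fieldType) (z w q : K) (y1 y3 : int) := z * w * q * q ^ (y1 - y3).
Definition kap (K : fieldType) (z w q : K) (y1 y3 : int) :=
  qpoch (z * w * q) q (y1 - y3) / (qpoch (z * q) q (y1 + y1 + y3) * qpoch (z * w * q) q (y1 - y3)
    * qpoch (w * q) q (- y1 - y3 - y3) * qpoch (z * w * q) q (y1 - y3)).

Lemma uvc (K : fieldType) (z w q : K) (y1 y3 : int) : q != 0 ->
  uu z q y1 y3 * vv w q y1 y3 / q = cc z w q y1 y3.
Proof.
move=> hq0; rewrite /uu /vv /cc.
have -> : y1 - y3 = (y1 + y1 + y3) + (- y1 - y3 - y3) by lia.
rewrite (expfzDr (y1 + y1 + y3) (- y1 - y3 - y3) hq0).
move: (q ^ (y1 + y1 + y3)) (q ^ (- y1 - y3 - y3)) => A B. field. by rewrite hq0.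
Qed.

Lemma nd1 (K : fieldType) (a q : K) : q != 0 -> (forall k : int, a * q ^ k != 1) ->
  forall t : int, a * q * q ^ t != 1.
Proof.
move=> hq0 h t; have := h (1 + t); by rewrite expfzDr // expr1z mulrA.
Qed.

Lemma ndP (K : fieldType) (a q : K) (k : int) : q != 0 -> (forall t : int, a * q ^ t != 1) ->
  forall i : nat, 1 - a * q ^ k * q ^+ i != 0.
Proof.
move=> hq0 h i; rewrite subr_eq0 eq_sym -mulrA.
have -> : q ^ k * q ^+ i = q ^ (k + i%:Z) by rewrite expfzDr.
exact: h.
Qed.

Lemma qpoch_ne0 (K : fieldType) (a q : K) (k : int) : (forall t : int, a * q ^ t != 1) ->
  qpoch a q k != 0.
Proof.
move=> h; have hn : forall t : int, 1 - a * q ^ t != 0 by move=> t; rewrite subr_eq0 eq_sym h.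
case: k => n /=.
  by apply/prodf_neq0 => i _; have := hn i.
rewrite invr_eq0; apply/prodf_neq0 => i _; have := hn (Negz i); by rewrite /exprz.
Qed.

Lemma term_eq (K : fieldType) (z w q : K) (y1 y3 : int) (N M i j : nat) :
  q != 0 -> z != 0 -> w != 0 ->
  (forall k : int, z * q ^ k != 1) -> (forall k : int, w * q ^ k != 1) ->
  (forall k : int, z * w * q ^ k != 1) ->
  (forall k : nat, 1 - q * q ^+ k != 0) ->
  (i <= N)%N -> (j <= M)%N ->
  Kker (y1 + N%:Z) (- y3 + M%:Z) (y1 + i%:Z) (- y3 + j%:Z) z w q
    * Phi (y1 + i%:Z) (- y3 + j%:Z) y1 (- y1 - y3) y3 z w q
  = z ^ y1 * w ^ (- y3) * q ^ (y1 * y1 + y1 * y3 + y3 * y3) * kap z w q y1 y3 *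
    (D q N i * D q M j * (uu z q y1 y3 / q) ^+ i * (vv w q y1 y3 / q) ^+ j
      * q ^+ (i * i) * q ^+ (j * j) / q ^+ (i * j) / (P (uu z q y1 y3) q i * P (vv w q y1 y3) q j)
     * (P (cc z w q y1 y3) q (i + j) / (P q q i * P q q j * P (cc z w q y1 y3) q i
        * P (cc z w q y1 y3) q j))).
Proof.
move=> hq0 hz0 hw0 hz hw hzw hq hiN hjM.
rewrite /Kker /Phi.
rewrite (_ : y1 + N%:Z - (y1 + i%:Z) = (N - i)%N%:Z); last by lia.
rewrite (_ : - y3 + M%:Z - (- y3 + j%:Z) = (M - j)%N%:Z); last by lia.
rewrite (_ : y1 + i%:Z + (- y3 + j%:Z) = (y1 - y3) + (i + j)%N%:Z); last by lia.
rewrite (_ : y1 + i%:Z - y1 = i%:Z); last by lia.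
rewrite (_ : y1 + i%:Z - (- y1 - y3) = (y1 + y1 + y3) + i%:Z); last by lia.
rewrite (_ : y1 + i%:Z - y3 = (y1 - y3) + i%:Z); last by lia.
rewrite (_ : - y3 + j%:Z + y3 = j%:Z); last by lia.
rewrite (_ : - y3 + j%:Z + (- y1 - y3) = (- y1 - y3 - y3) + j%:Z); last by lia.
rewrite (_ : - y3 + j%:Z + y1 = (y1 - y3) + j%:Z); last by lia.
rewrite qexp // (expfzDr _ _ hz0) (expfzDr _ _ hw0) !qpoch_nat.
have hzw1 := nd1 hq0 hzw; have hz1 := nd1 hq0 hz; have hw1 := nd1 hq0 hw.
rewrite !qpoch_split //.
rewrite /D hiN hjM /kap /uu /vv /cc.
have k1 := qpoch_ne0 (y1 - y3) hzw1; have k2 := qpoch_ne0 (y1 + y1 + y3) hz1;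
  have k3 := qpoch_ne0 (- y1 - y3 - y3) hw1.
have p1 := ndP (y1 - y3) hq0 hzw1; have p2 := ndP (y1 + y1 + y3) hq0 hz1;
  have p3 := ndP (- y1 - y3 - y3) hq0 hw1.
have P1 := Pne0 i p1; have P2 := Pne0 j p1; have P3 := Pne0 (i + j) p1; have P4 := Pne0 i p2;
  have P5 := Pne0 j p3; have P6 := Pne0 i hq; have P7 := Pne0 j hq;
  have P8 := Pne0 (N - i) hq; have P9 := Pne0 (M - j) hq.
have e1 : z ^ y1 != 0 by rewrite expfz_eq0 negb_and hz0 orbT.
have e2 : w ^ (- y3) != 0 by rewrite expfz_eq0 negb_and hw0 orbT.
have e3 : q ^ (y1 * y1 + y1 * y3 + y3 * y3) != 0 by rewrite expfz_eq0 negb_and hq0 orbT.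
have e4 : q ^+ (i * j) != 0 by rewrite expf_neq0.
move: (P (z * w * q * q ^ (y1 - y3)) q) (P (z * q * q ^ (y1 + y1 + y3)) q i)
  (P (w * q * q ^ (- y1 - y3 - y3)) q j) P1 P2 P3 P4 P5 => F X Y P1 P2 P3 P4 P5.
move: (qpoch (z * w * q) q (y1 - y3)) (qpoch (z * q) q (y1 + y1 + y3))
  (qpoch (w * q) q (- y1 - y3 - y3)) k1 k2 k3 => Q1 Q2 Q3 k1 k2 k3.
move: (z ^ y1) (w ^ (- y3)) (q ^ (y1 * y1 + y1 * y3 + y3 * y3)) e1 e2 e3 => Z W E e1 e2 e3.
move: (q ^ (y1 + y1 + y3)) (q ^ (- y1 - y3 - y3)) => A B.
rewrite (_ : z ^ i%:Z = z ^+ i) // (_ : w ^ j%:Z = w ^+ j) //.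
rewrite (_ : z * q * A / q = z * A); last by field.
rewrite (_ : w * q * B / q = w * B); last by field.
rewrite !exprMn.
field. nz.
Qed.

Lemma rhs_eq (K : fieldType) (z w q : K) (y1 y3 : int) (N M : nat) :
  q != 0 -> (forall k : int, z * q ^ k != 1) -> (forall k : int, w * q ^ k != 1) ->
  (forall k : int, z * w * q ^ k != 1) -> (forall k : nat, 1 - q * q ^+ k != 0) ->
  Phi (y1 + N%:Z) (- y3 + M%:Z) y1 (- y1 - y3) y3 z w q
  = kap z w q y1 y3 * (P (cc z w q y1 y3) q (N + M) / (P q q N * P q q M * P (uu z q y1 y3) q N
       * P (vv w q y1 y3) q M * P (cc z w q y1 y3) q N * P (cc z w q y1 y3) q M)).
Proof.
move=> hq0 hz hw hzw hq.
rewrite /Phi.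
rewrite (_ : y1 + N%:Z + (- y3 + M%:Z) = (y1 - y3) + (N + M)%N%:Z); last by lia.
rewrite (_ : y1 + N%:Z - y1 = N%:Z); last by lia.
rewrite (_ : y1 + N%:Z - (- y1 - y3) = (y1 + y1 + y3) + N%:Z); last by lia.
rewrite (_ : y1 + N%:Z - y3 = (y1 - y3) + N%:Z); last by lia.
rewrite (_ : - y3 + M%:Z + y3 = M%:Z); last by lia.
rewrite (_ : - y3 + M%:Z + (- y1 - y3) = (- y1 - y3 - y3) + M%:Z); last by lia.
rewrite (_ : - y3 + M%:Z + y1 = (y1 - y3) + M%:Z); last by lia.
have hzw1 := nd1 hq0 hzw; have hz1 := nd1 hq0 hz; have hw1 := nd1 hq0 hw.
rewrite !qpoch_nat !qpoch_split // /kap /uu /vv /cc.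
have k1 := qpoch_ne0 (y1 - y3) hzw1; have k2 := qpoch_ne0 (y1 + y1 + y3) hz1;
  have k3 := qpoch_ne0 (- y1 - y3 - y3) hw1.
have p1 := ndP (y1 - y3) hq0 hzw1; have p2 := ndP (y1 + y1 + y3) hq0 hz1;
  have p3 := ndP (- y1 - y3 - y3) hq0 hw1.
have P1 := Pne0 N p1; have P2 := Pne0 M p1; have P3 := Pne0 (N + M) p1; have P4 := Pne0 N p2;
  have P5 := Pne0 M p3; have P6 := Pne0 N hq; have P7 := Pne0 M hq.
move: (P (z * w * q * q ^ (y1 - y3)) q) (P (z * q * q ^ (y1 + y1 + y3)) q N)
  (P (w * q * q ^ (- y1 - y3 - y3)) q M) P1 P2 P3 P4 P5 => F X Y P1 P2 P3 P4 P5.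
move: (qpoch (z * w * q) q (y1 - y3)) (qpoch (z * q) q (y1 + y1 + y3))
  (qpoch (w * q) q (- y1 - y3 - y3)) k1 k2 k3 => Q1 Q2 Q3 k1 k2 k3.
field. nz.
Qed.

Theorem corollary4p5 (K : fieldType) (z w q : K) (n m y1 y2 y3 : int)
  (hy : y1 + y2 + y3 = 0)
  (hq0 : q != 0) (hz0 : z != 0) (hw0 : w != 0)
  (hq : forall k : nat, (0 < k)%N -> q ^+ k != 1)
  (hz : forall k : int, z * q ^ k != 1)
  (hw : forall k : int, w * q ^ k != 1)
  (hzw : forall k : int, z * w * q ^ k != 1) :
  isum y1 n (fun r => isum (y1 + y2) m (fun s =>
      Kker n m r s z w q * Phi r s y1 y2 y3 z w q))
  = z ^ y1 * w ^ (y1 + y2)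
    * q ^ ((y1 * y1 + y2 * y2 + y3 * y3) %/ 2)%Z
    * Phi n m y1 y2 y3 z w q.
Proof.
have hqn : forall k : nat, 1 - q * q ^+ k != 0.
  by move=> k; rewrite subr_eq0 eq_sym -exprS hq.
have -> : y2 = - y1 - y3 by lia.
have hPhi0 : forall n m, (n - y1 < 0 \/ m + y3 < 0) -> Phi n m y1 (- y1 - y3) y3 z w q = 0.
  move=> n' m' [] h; rewrite /Phi.
  - by rewrite (qpoch_qq_neg hq0 h) !mul0r invr0 mulr0.
  - by rewrite (qpoch_qq_neg hq0 h) !mulr0 !mul0r invr0 mulr0.
have [hn|hn] := ltP n y1.
  rewrite hPhi0 ?mulr0; last by left; lia.
  by rewrite /isum ifF //; apply/negbTE; rewrite -ltNge.
have [hm|hm] := ltP (m + y3) 0.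
  rewrite hPhi0 ?mulr0; last by right.
  rewrite /isum; case: ifP => // _; rewrite big1 // => i _.
  by rewrite ifF //; apply/negbTE; rewrite -ltNge; lia.
have [N ->] : exists N : nat, n = y1 + N%:Z by exists (absz (n - y1)); rewrite gez0_abs; lia.
have [M ->] : exists M : nat, m = - y3 + M%:Z by exists (absz (m + y3)); rewrite gez0_abs; lia.
rewrite /isum ifT; last by lia.
rewrite (_ : y1 + N%:Z - y1 = N%:Z); last by lia.
rewrite (_ : - y3 + M%:Z - (y1 + (- y1 - y3)) = M%:Z); last by lia.
rewrite (_ : y1 + (- y1 - y3) = - y3); last by lia.
have -> : (- y3 <= - y3 + M%:Z) = true by lia.
change (absz N%:Z) with N; change (absz M%:Z) with M.
rewrite (_ : (y1 * y1 + (- y1 - y3) * (- y1 - y3) + y3 * y3) = (y1 * y1 + y1 * y3 + y3 * y3) * 2);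
  last by ring.
rewrite mulzK //.
under eq_bigr => i _ do under eq_bigr => j _ do
  rewrite (term_eq y1 y3 hq0 hz0 hw0 hz hw hzw hqn (ltn_ord i : (i <= N)%N) (ltn_ord j : (j <= M)%N)).
under eq_bigr => i _ do rewrite -mulr_sumr.
rewrite -mulr_sumr.
have hzw1 := nd1 hq0 hzw; have hz1 := nd1 hq0 hz; have hw1 := nd1 hq0 hw.
have hc0 : forall i : nat, 1 - uu z q y1 y3 * vv w q y1 y3 / q * q ^+ i != 0.
  by rewrite uvc //; exact: ndP.
have := @core _ q (uu z q y1 y3) (vv w q y1 y3) N M hq0 hqn (ndP _ hq0 hz1) (ndP _ hq0 hw1) hc0.
rewrite uvc // => ->.
by rewrite rhs_eq // [RHS]mulrA.
Qed.
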